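(* Let $X$ be a stacked simplicial complex of dimension $d$ and $c$ a codimension one face of $X$. Let $m\ge 1$ and let $v\in V_m\setminus V_{m-1}$. Then there is a unique facet $f_v$ in $X_m$ containing $v$, and $f_v\setminus\{v\}\subseteq V_{m-1}$.
   Context: A simplicial complex $X$ on a finite vertex set $V$ is a family of subsets (faces) of $V$ closed under taking subsets, every element of $V$ lying in some face; facets are inclusion-maximal faces. $X$ is pure of dimension $d$ if every facet has $d+1$ elements; a codimension one face is a face with $d$ elements. $X$ is stacked if it is pure of some dimension $d$ and its facets can be ordered $F_0,F_1,\dots,F_k$ such that for each $p\ge 1$, $F_p$ contains exactly one vertex $v_p$ not in $F_0\cup\dots\cup F_{p-1}$, and $F_p\setminus\{v_p\}\subseteq F_j$ for some $j<p$. A walk is a sequence of facets $f_1,\dots,f_p$ ($p\ge 1$) such that each $f_i\cap f_{i+1}$ has exactly $d$ elements. Fix a codimension one face $c$. The distance from a facet $f$ to $c$ is the minimal $r\ge1$ such that there is a walk $f_1,\dots,f_r$ with $f_1=f$ and $c\subseteq f_r$. For $m\ge 0$, $X_m$ is the set of facets at distance $\le m$ from $c$ (so $X_0=\emptyset$ and $X_1$ is the set of facets containing $c$). $V_0$ is the vertex set of $c$, and for $m\ge1$, $V_m$ is the set of vertices lying in some facet of $X_m$. *)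

(* Defs.v *)
From mathcomp Require Import all_boot.
Set Implicit Arguments. Unset Strict Implicit. Unset Printing Implicit Defensive.

Section Complexes.
Variable V : finType.
Implicit Types (X : {set {set V}}) (F G c : {set V}).

Definition simplicial_complex X : Prop :=
  (forall F G, F \in X -> G \subset F -> G \in X) /\
  (forall v : V, exists2 F, F \in X & v \in F).

Definition facet X F : Prop :=
  F \in X /\ (forall G, G \in X -> F \subset G -> G = F).

Definition pure X (d : nat) : Prop :=
  forall F, facet X F -> #|F| = d.+1.

Definition codim1_face X (d : nat) c : Prop := c \in X /\ #|c| = d.

Definition stacked X : Prop :=
  (exists d, pure X d) /\
  exists s : seq {set V},
    [/\ 0 < size s, uniq s,
        (forall F, F \in s <-> facet X F) &
        forall p, 0 < p < size s ->
          exists v : V,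
            nth set0 s p :\: (\bigcup_(j < p) nth set0 s j) = [set v] /\
            exists2 j, j < p & nth set0 s p :\ v \subset nth set0 s j].

Definition adj (d : nat) : rel {set V} := fun f g => #|f :&: g| == d.

(* a walk f = f_1, f_2, ..., f_r (r = size s + 1) of facets *)
Definition walk X d (f : {set V}) (s : seq {set V}) : Prop :=
  facet X f /\ (forall g, g \in s -> facet X g) /\ path (adj d) f s.

(* f is at distance <= m from c, i.e. f \in X_m *)
Definition in_Xm X d c (m : nat) f : Prop :=
  facet X f /\
  exists s, [/\ walk X d f s, c \subset last f s & (size s).+1 <= m].

Definition in_Vm X d c (m : nat) (v : V) : Prop :=
  if m is 0 then v \in c else exists f, in_Xm X d c m f /\ v \in f.

End Complexes.

(* Main.v *)
Require Import Defs.
From mathcomp Require Import all_boot zify.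
From Stdlib Require Import Classical.
Set Implicit Arguments. Unset Strict Implicit. Unset Printing Implicit Defensive.

Section Aux.
Variable V : finType.
Implicit Types (F G H s : {set V}).

Lemma adjC d F G : adj d F G = adj d G F.
Proof. by rewrite /adj setIC. Qed.

Lemma adj_irr d F : #|F| = d.+1 -> ~~ adj d F F.
Proof. by rewrite /adj setIid => ->; rewrite eqn_leq ltnn. Qed.

Lemma ext_eq d F s v : #|F| = d.+1 -> #|s| = d -> s \subset F -> v \in F ->
  v \notin s -> F = v |: s.
Proof.
move=> cF cs sF vF vs; apply/eqP; rewrite eq_sym eqEcard subUset sub1set vF sF /=.
by rewrite cardsU1 vs cF cs.
Qed.

Lemma adj_common d G H s : #|G| = d.+1 -> #|H| = d.+1 -> #|s| = d ->
  s \subset G -> s \subset H -> G <> H -> adj d G H.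
Proof.
move=> cG cH cs sG sH nGH; rewrite /adj.
have h1 : #|s| <= #|G :&: H| by apply: subset_leq_card; rewrite subsetI sG sH.
have h2 : #|G :&: H| <= #|G| by apply: subset_leq_card; rewrite subsetIl.
case: (ltnP #|G :&: H| #|G|) => lt; first by apply/eqP; lia.
have e : G :&: H = G by apply/eqP; rewrite eqEcard subsetIl lt.
have GH : G \subset H by apply/setIidPl.
by exfalso; apply: nGH; apply/eqP; rewrite eqEcard GH cG cH leqnn.
Qed.

Lemma adj_sigma d F G u : #|F| = d.+1 -> u \in F -> u \notin G -> adj d F G ->
  F :\ u \subset G.
Proof.
move=> cF uF uG /eqP aFG.
have cs : #|F :\ u| = d by move: cF; rewrite (cardsD1 u) uF; case.
have sub : F :&: G \subset F :\ u.
  apply/subsetP => x; rewrite !inE => /andP [xF xG]; rewrite xF andbT.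
  by apply/eqP => exu; move: uG; rewrite -exu xG.
have e : F :&: G == F :\ u by rewrite eqEcard sub cs aFG leqnn.
by rewrite -(eqP e) subsetIr.
Qed.

End Aux.

Section Core.
Variable V : finType.
Variables (s : seq {set V}) (d : nat).
Hypothesis Hcard : forall F, F \in s -> #|F| = d.+1.
Hypothesis Hnew : forall p, 0 < p < size s -> exists u : V,
  nth set0 s p :\: (\bigcup_(j < p) nth set0 s j) = [set u].

Lemma core q : q <= size s -> forall (v : V) n (h : nat -> {set V}), 1 < n ->
  (forall i, i <= n -> h i \in take q s) ->
  (forall i, i < n -> adj d (h i) (h i.+1)) ->
  v \in h 0 -> v \in h n -> h 0 <> h n ->
  (forall i, 0 < i < n -> v \notin h i) -> False.
Proof.
elim: q => [|q IHq] qs.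
  by move=> v n h _ hin; have := hin 0 (leq0n _); rewrite take0.
set F := nth set0 s q.
have Etake : take q.+1 s = rcons (take q s) F by apply: take_nth.
have Fs : F \in s by apply: mem_nth.
have cF : #|F| = d.+1 by apply: Hcard.
case: (posnP q) => [q0 | qpos].
  move=> v n h _ hin _ _ _ e _; apply: e.
  have := hin 0 (leq0n _); have := hin n (leqnn _).
  rewrite Etake q0 take0 /= !inE => /eqP -> /eqP -> //.
have [u Hu] : exists u : V, F :\: (\bigcup_(j < q) nth set0 s j) = [set u].
  by apply: Hnew; rewrite qpos qs.
have uF : u \in F by have := set11 u; rewrite -Hu => /setDP [].
have uold : forall G, G \in take q s -> u \notin G.
  move=> G /(nthP set0) [j jlt <-].
  have jq : j < q.
    move: jlt; rewrite size_take; case: ifP => // /negbT; rewrite -leqNgt => ? ?; lia.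
  rewrite nth_take //.
  have : u \notin \bigcup_(j < q) nth set0 s j by have := set11 u; rewrite -Hu => /setDP [].
  apply: contra => uj; apply/bigcupP; by exists (Ordinal jq).
have sig : forall G, G \in take q.+1 s -> adj d F G -> F :\ u \subset G.
  move=> G GT aFG; case: (eqVneq G F) => [GF | nGF].
    by move: aFG; rewrite GF => aFF; move: (adj_irr cF); rewrite aFF.
  move: GT; rewrite Etake mem_rcons inE (negbTE nGF) /= => GT.
  exact: adj_sigma cF uF (uold _ GT) aFG.
have cs : #|F :\ u| = d by move: cF; rewrite (cardsD1 u) uF; case.
move=> v; elim/ltn_ind => n IHn h n1 hin hadj hv0 hvn h0n hmid.
have hin' : forall i, i <= n -> h i = F \/ h i \in take q s.
  move=> i /hin; rewrite Etake mem_rcons inE => /orP [/eqP|]; by [left|right].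
have cardh : forall i, i <= n -> #|h i| = d.+1 by move=> i /hin /mem_take /Hcard.
case: (classic (exists i, i <= n /\ h i = F)) => [[i [iln hiF]] | noF]; last first.
  apply: (IHq (ltnW qs) v n h) => // i il.
  case: (hin' i il) => // e; exfalso; apply: noF; by exists i.
case: (posnP i) => [i0|ipos].
  subst i.
  have s1 : F :\ u \subset h 1.
    apply: sig; first by apply: hin; lia.
    by rewrite -hiF; apply: hadj; lia.
  case: (eqVneq v u) => [vu | vnu].
    case: (hin' n (leqnn _)) => [e|hT]; first by apply: h0n; rewrite hiF e.
    by move: (uold _ hT); rewrite -vu hvn.
  have : v \in h 1 by apply: (subsetP s1); rewrite !inE vnu -hiF hv0.
  by rewrite (negbTE (hmid 1 _)) //; lia.
case: (eqVneq i n) => [ein | nin].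
  subst i.
  have s1 : F :\ u \subset h n.-1.
    apply: sig; first by apply: hin; lia.
    have e : n.-1.+1 = n by lia.
    rewrite adjC -hiF -{2}e; apply: hadj; lia.
  case: (eqVneq v u) => [vu | vnu].
    case: (hin' 0 (leq0n _)) => [e|hT]; first by apply: h0n; rewrite hiF e.
    by move: (uold _ hT); rewrite -vu hv0.
  have : v \in h n.-1 by apply: (subsetP s1); rewrite !inE vnu -hiF hvn.
  by rewrite (negbTE (hmid n.-1 _)) //; lia.
have iln' : i < n by lia.
have vF : v \notin F by rewrite -hiF; apply: hmid; lia.
have vs : v \notin F :\ u by rewrite !inE negb_and vF orbT.
set a := h i.-1; set b := h i.+1.
have sa : F :\ u \subset a.
  apply: sig; first by apply: hin; lia.
  have e : i.-1.+1 = i by lia.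
  rewrite adjC -hiF /a -{2}e; apply: hadj; lia.
have sb : F :\ u \subset b.
  apply: sig; first by apply: hin; lia.
  by rewrite -hiF; apply: hadj; lia.
have ca : #|a| = d.+1 by apply: cardh; lia.
have cb : #|b| = d.+1 by apply: cardh; lia.
case: (eqVneq a b) => [eab | nab].
  have i2 : 1 < i.
    case: (ltnP 1 i) => // i1; have ei : i = 1 by lia.
    have va : v \in b by rewrite -eab /a ei.
    case: (ltnP i.+1 n) => lt.
      by move: va; rewrite /b (negbTE (hmid i.+1 _)) //; lia.
    exfalso; apply: h0n; have -> : n = i.+1 by lia.
    by rewrite -/b -eab /a ei.
  have i3 : i.+2 <= n.
    case: (ltnP i.+1 n) => // i1; have ei : n = i.+1 by lia.
    have va : v \in a by rewrite eab /b -ei.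
    by move: va; rewrite /a (negbTE (hmid i.-1 _)) //; lia.
  apply: (IHn n.-2 _ (fun j => if j < i then h j else h j.+2)).
  - lia.
  - lia.
  - move=> j jl; case: ltnP => _; apply: hin; lia.
  - move=> j jl; case: (ltnP j.+1 i) => j1.
      rewrite /= ?j1; idtac.
      have -> : j < i by lia.
      apply: hadj; lia.
    rewrite /=.
    case: (ltnP j i) => j2.
      have ej : j = i.-1 by lia.
      rewrite ej -/a eab /b; have -> : i.-1.+3 = i.+2 by lia.
      apply: hadj; lia.
    apply: hadj; lia.
  - by rewrite ipos.
  - rewrite ifF; last by apply/negbTE; rewrite -leqNgt; lia.
    by have -> : n.-2.+2 = n by lia.
  - rewrite ipos ifF; last by apply/negbTE; rewrite -leqNgt; lia.
    by have -> : n.-2.+2 = n by lia.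
  - move=> j jl; case: ltnP => _; apply: hmid; lia.
have n3 : 2 < n.
  case: (ltnP 2 n) => // n2; have en : n = 2 by lia.
  have ei : i = 1 by lia.
  have ea : a = v |: (F :\ u) by apply: (ext_eq ca cs sa) => //; rewrite /a ei.
  have eb : b = v |: (F :\ u) by apply: (ext_eq cb cs sb) => //; rewrite /b ei -en.
  by move: nab; rewrite ea eb eqxx.
have aab : #|a :&: b| = d.
  apply/eqP; apply: (adj_common ca cb cs sa sb) => e; move: nab; by rewrite e eqxx.
clear nab.
apply: (IHn n.-1 _ (fun j => if j < i then h j else h j.+1)).
- lia.
- lia.
- move=> j jl; case: ltnP => _; apply: hin; lia.
- move=> j jl; case: (ltnP j.+1 i) => j1.
    rewrite /= ?j1; have -> : j < i by lia.
    apply: hadj; lia.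
  rewrite /=.
  case: (ltnP j i) => j2.
    have ej : j = i.-1 by lia.
    rewrite ej -/a; have -> : i.-1.+2 = i.+1 by lia.
    by apply/eqP.
  apply: hadj; lia.
- by rewrite ipos.
- rewrite ifF; last by apply/negbTE; rewrite -leqNgt; lia.
  by have -> : n.-1.+1 = n by lia.
- rewrite ipos ifF; last by apply/negbTE; rewrite -leqNgt; lia.
  by have -> : n.-1.+1 = n by lia.
- move=> j jl; case: ltnP => _; apply: hmid; lia.
Qed.

End Core.

Section Walks.
Variable V : finType.
Variables (X : {set {set V}}) (d : nat) (c : {set V}).

Lemma Xm_fun M f : in_Xm X d c M f -> exists (A : nat -> {set V}) n,
  [/\ A 0 = f, (forall i, i <= n -> facet X (A i)),
      (forall i, i < n -> adj d (A i) (A i.+1)), c \subset A n & n < M].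
Proof.
case=> fF [t [[_ [tF pt]] ct st]].
exists (fun i => nth f (f :: t) i), (size t); split => //.
- case=> [|i] /= hi; first by []. by apply: tF; apply: mem_nth.
- by move=> i hi; exact: (pathP f pt i hi).
- by rewrite -[size t]/(size (f :: t)).-1 nth_last.
Qed.

Lemma Xm_of_fun M (A : nat -> {set V}) n :
  (forall i, i <= n -> facet X (A i)) ->
  (forall i, i < n -> adj d (A i) (A i.+1)) -> c \subset A n -> n < M ->
  in_Xm X d c M (A 0).
Proof.
move=> hF hA hc hM.
set t := map (fun j => A j.+1) (iota 0 n).
have st : size t = n by rewrite size_map size_iota.
have nt : forall i, i <= n -> nth (A 0) (A 0 :: t) i = A i.
  case=> [|i] //= hi; rewrite (nth_map 0); last by rewrite size_iota.
  by rewrite nth_iota.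
split; first by apply: hF.
exists t; split => //.
- split; first by apply: hF.
  split.
    move=> g /mapP [j]; rewrite mem_iota => /andP [_ jn] ->; apply: hF; lia.
  apply/(pathP (A 0)) => i; rewrite st => hi.
  rewrite nt; last by lia.
  have := nt i.+1 hi; rewrite /= => ->; exact: hA.
- by have := nth_last (A 0) (A 0 :: t); rewrite /= => <-; rewrite st nt.
- by rewrite st.
Qed.

Lemma join_walk (A B : nat -> {set V}) n p (P Q : {set V} -> Prop) :
  (forall i, i < n -> adj d (A i) (A i.+1)) ->
  (forall i, i < p -> adj d (B i) (B i.+1)) -> adj d (A n) (B p) ->
  (forall i, i <= n -> P (A i)) -> (forall i, i <= p -> P (B i)) ->
  (forall i, 0 < i <= n -> Q (A i)) -> (forall i, 0 < i <= p -> Q (B i)) ->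
  let h := fun j => if j <= n then A j else B (n + p + 1 - j) in
  [/\ forall j, j < n + p + 1 -> adj d (h j) (h j.+1),
      h 0 = A 0, h (n + p + 1) = B 0,
      forall j, j <= n + p + 1 -> P (h j) &
      forall j, 0 < j < n + p + 1 -> Q (h j)].
Proof.
move=> hA hB hAB PA PB QA QB h; split.
- move=> j hj; rewrite /h; case: (leqP j n) => j1; case: (leqP j.+1 n) => j2.
  + exact: hA.
  + have ej : j = n by lia.
    rewrite ej; have -> : n + p + 1 - n.+1 = p by lia. exact: hAB.
  + lia.
  + rewrite adjC; have -> : n + p + 1 - j = (n + p + 1 - j.+1).+1 by lia.
    apply: hB; lia.
- by rewrite /h leq0n.
- rewrite /h; case: leqP => ?; first lia.
  by have -> : n + p + 1 - (n + p + 1) = 0 by lia.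
- move=> j hj; rewrite /h; case: leqP => ?; [apply: PA | apply: PB]; lia.
- move=> j hj; rewrite /h; case: leqP => ?; [apply: QA | apply: QB]; lia.
Qed.

End Walks.

Theorem lemma2p10 (V : finType) (X : {set {set V}}) (d : nat) (c : {set V})
    (m : nat) (v : V) :
  simplicial_complex X -> stacked X -> pure X d -> codim1_face X d c ->
  1 <= m -> in_Vm X d c m v -> ~ in_Vm X d c m.-1 v ->
  exists f : {set V},
    [/\ in_Xm X d c m f, v \in f,
        (forall g, in_Xm X d c m g -> v \in g -> g = f) &
        forall w, w \in f :\ v -> in_Vm X d c m.-1 w].
Proof.
move=> _ [_ [s [s0 us Hs Hst]]] pd [cX cc] m1 Hv nHv.
have Hcard : forall F, F \in s -> #|F| = d.+1 by move=> F /Hs /pd.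
have Hnew : forall p, 0 < p < size s -> exists u : V,
    nth set0 s p :\: (\bigcup_(j < p) nth set0 s j) = [set u].
  by move=> p /Hst [u [Hu _]]; exists u.
have core' := core Hcard Hnew (leqnn (size s)).
rewrite take_size in core'.
have fcard : forall F, in_Xm X d c m F -> #|F| = d.+1 by move=> F [/pd].
case: m m1 Hv nHv fcard => // m' _ Hv nHv fcard.
case: m' Hv nHv fcard => [|k] Hv nHv fcard /=.
-
  have vc : v \notin c by apply/negP.
  have ext : forall g, in_Xm X d c 1 g -> v \in g -> g = v |: c.
    move=> g Xg vg; have [A [n [A0 _ _ hc hn]]] := Xm_fun Xg.
    have n0 : n = 0 by lia.
    move: hc; rewrite n0 A0 => hc.
    exact: ext_eq (fcard _ Xg) cc hc vg vc.
  case: Hv => f [Xf vf]; exists f; split => //.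
    by move=> g Xg vg; rewrite (ext g Xg vg) (ext f Xf vf).
  move=> w; rewrite (ext f Xf vf) !inE => /andP [wv /orP [] //].
  by move=> /eqP wv'; move: wv; rewrite wv' eqxx.
-
  simpl in nHv.
  have key : forall g, in_Xm X d c k.+2 g -> v \in g ->
     exists A : nat -> {set V}, [/\ A 0 = g, (forall i, i <= k.+1 -> facet X (A i)),
        (forall i, i < k.+1 -> adj d (A i) (A i.+1)), c \subset A k.+1 &
        forall i, 0 < i <= k.+1 -> in_Xm X d c k.+1 (A i)].
    move=> g Xg vg; have [A [n [A0 hF hA hc hn]]] := Xm_fun Xg.
    case: (ltnP n k.+1) => nk.
      exfalso; apply: nHv; exists g; split => //.
      by rewrite -A0; apply: (Xm_of_fun hF hA hc nk).
    have en : n = k.+1 by lia.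
    subst n; exists A; split => // i hi.
    have := @Xm_of_fun V X d c k.+1 (fun j => A (i + j)) (k.+1 - i).
    rewrite addn0; apply.
    + move=> j hj; apply: hF; lia.
    + move=> j hj; rewrite addnS; apply: hA; lia.
    + by have -> : i + (k.+1 - i) = k.+1 by lia.
    + lia.
  have avoid : forall A : nat -> {set V}, (forall i, 0 < i <= k.+1 -> in_Xm X d c k.+1 (A i)) ->
      forall i, 0 < i <= k.+1 -> v \notin A i.
    move=> A hX i hi; apply/negP => vi; apply: nHv; exists (A i); split => //; exact: hX.
  case: Hv => f [Xf vf]; exists f; split => //.
  + move=> g Xg vg; apply/eqP; apply/negP => /negP ngf.
    have [A [A0 hFA hA hcA hXA]] := key f Xf vf.
    have [B [B0 hFB hB hcB hXB]] := key g Xg vg.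
    have avA := avoid A hXA; have avB := avoid B hXB.
    have Ps : forall G, facet X G -> G \in s by move=> G /Hs.
    have finish : forall p, p <= k.+1 -> adj d (A k.+1) (B p) -> False.
      move=> p hp hAB.
      have avB' : forall i, 0 < i <= p -> v \notin B i.
        move=> i /andP [i0 ip]; apply: avB; rewrite i0; exact: leq_trans hp.
      have [hadj h0 hN hP hQ] := join_walk (P := fun G => G \in s)
         (Q := fun G => v \notin G) hA (fun i hi => hB i (leq_trans hi hp)) hAB
         (fun i hi => Ps _ (hFA i hi)) (fun i hi => Ps _ (hFB i (leq_trans hi hp)))
         avA avB'.
      apply: (core' v (k.+1 + p + 1) _ _ _ hadj).
      * lia.
      * exact: hP.
      * by rewrite h0 A0.
      * by rewrite hN B0.
      * by rewrite h0 hN A0 B0 => e; move: ngf; rewrite e eqxx.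
      * exact: hQ.
    case: (eqVneq (A k.+1) (B k.+1)) => [e | ne].
      apply: (finish k (leqnSn _)); rewrite e adjC; exact: hB.
    apply: (finish k.+1 (leqnn _)).
    have cA : #|A k.+1| = d.+1 by apply: pd; apply: hFA.
    have cB : #|B k.+1| = d.+1 by apply: pd; apply: hFB.
    apply: (adj_common cA cB cc hcA hcB) => e; by move: ne; rewrite e eqxx.
  + have [A [A0 hFA hA hcA hXA]] := key f Xf vf.
    have v1 : v \notin A 1 by apply: (avoid A hXA).
    have a1 : adj d f (A 1) by rewrite -A0; apply: hA.
    have cf : #|f| = d.+1 by apply: fcard.
    have sub : f :\ v \subset A 1.
      have cs : #|f :\ v| = d by move: cf; rewrite (cardsD1 v) vf; case.
      have sub : f :&: A 1 \subset f :\ v.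
        apply/subsetP => x; rewrite !inE => /andP [xf xA]; rewrite xf andbT.
        by apply/eqP => exv; move: v1; rewrite -exv xA.
      have e : f :&: A 1 == f :\ v by rewrite eqEcard sub cs (eqP a1) leqnn.
      by rewrite -(eqP e) subsetIr.
    move=> w wf; exists (A 1); split; last exact: (subsetP sub).
    exact: hXA.
Qed.
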